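(* In the strategic matching-queue model of the context, under the ACR policy it is a dominant strategy for a specialized agent of type $i\in\mathcal{L}\setminus\{0\}$ to join queue $i$; i.e. in equilibrium $\sigma^{\mathrm{ACR}}_{ii}=1$ for all $i\in\mathcal{L}\setminus\{0\}$.
   Context: Types $\mathcal{L}=\{0,\dots,\ell\}$; agents of type $i$ arrive Poisson at rate $\lambda_i>0$, jobs of type $j$ Poisson at rate $\mu_j>0$, independently; type $0$ agents can fulfill all jobs, type $i\ge1$ (specialized) agents only type $i$ jobs; unmatched jobs are lost; waiting agents abandon at exponential rate $\theta>0$. Agent types are private. The ACR policy offers queues $\{0,1,\dots,\ell\}$; a type $0$ job is offered only to queue $0$, a type $j\ge1$ job first to queue $j$ and then to queue $0$; within a queue the job is offered to uniformly random agents (without replacement), each accepting iff compatible (rejection takes no time). Each arriving type $i$ agent joins queue $q$ with probability $\sigma_{iq}$ and never switches; agents choose queues to minimize expected steady-state waiting time until match. Joining queue $i$ being a dominant strategy means that for every profile of the other agents, the expected waiting time of a type $i$ agent in queue $i$ is no larger than in any other queue. *)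

(* Defs.v *)
From HB Require Import structures.
From mathcomp Require Import all_boot all_order all_algebra.
From mathcomp Require Import all_classical all_reals.
From mathcomp Require Import ereal esum.
Set Implicit Arguments. Unset Strict Implicit. Unset Printing Implicit Defensive.
Import Order.TTheory GRing.Theory Num.Theory.
Local Open Scope classical_set_scope.
Local Open Scope ring_scope.

(* Types / queues are 'I_l.+1 = {0,...,l}; type 0 is the flexible type,
   queue 0 the flexible queue.                                            *)

(* Population state: x (a, q) = number of waiting agents of type a in queue q. *)
Definition state (l : nat) := {ffun 'I_l.+1 * 'I_l.+1 -> nat}.

Definition inc_st l (x : state l) (a q : 'I_l.+1) : state l :=
  [ffun p => (x p + (p == (a, q)))%N].
Definition dec_st l (x : state l) (a q : 'I_l.+1) : state l :=
  [ffun p => (x p - (p == (a, q)))%N].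

Section Model.
Context {R : realType} {l : nat}.
Variables (lam mu : 'I_l.+1 -> R) (theta : R) (sigma : 'I_l.+1 -> 'I_l.+1 -> R).

(* agent of type a can fulfil job of type j *)
Definition compat (a j : 'I_l.+1) : bool := (a == ord0) || (a == j).

Definition ncomp (x : state l) (j q : 'I_l.+1) : nat :=
  (\sum_(b < l.+1) (if compat b j then x (b, q) else 0))%N.

(* ACR: a type j job is offered to queue j; a type j >= 1 job is then
   offered to queue 0 if queue j contains no compatible agent.           *)
Definition reaches (x : state l) (j q : 'I_l.+1) : bool :=
  (q == j) || ((q == ord0) && (ncomp x j j == 0%N)).

(* probability that an arriving type j job is matched to a (type a, queue q)
   agent: uniform among the compatible agents of the first queue (in offer
   order) that contains a compatible agent.                               *)
Definition pmatch (x : state l) (j a q : 'I_l.+1) : R :=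
  if [&& compat a j, reaches x j q & (0 < ncomp x j q)%N]
  then (x (a, q))%:R / (ncomp x j q)%:R else 0.

Definition mrate (x : state l) (a q : 'I_l.+1) : R :=
  \sum_(j < l.+1) mu j * pmatch x j a q.

Definition Qenv (x y : state l) : R :=
  \sum_(a < l.+1) \sum_(q < l.+1)
    ((if y == inc_st x a q then lam a * sigma a q else 0) +
     (if (0 < x (a, q))%N && (y == dec_st x a q)
      then theta * (x (a, q))%:R + mrate x a q else 0)).

Definition stationary (pi : state l -> R) : Prop :=
  [/\ forall x, 0 <= pi x,
      (\esum_(x in [set: state l]) (pi x)%:E = 1)%E &
      forall y, ((pi y * \sum_(a < l.+1) \sum_(q < l.+1)
                   (lam a * sigma a q +
                    (if (0 < y (a, q))%N then theta * (y (a, q))%:R + mrate y a q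
                     else 0)))%:E
                 = \esum_(x in [set: state l]) (pi x * Qenv x y)%:E)%E].

(* ---------- chain seen by a tagged agent of type i in queue q ----------
   x = state of the OTHER agents; the tagged agent is one of the
   x (i,q) + 1 agents of type i in queue q of the full state inc_st x i q. *)
Definition share (x : state l) (i q a b : 'I_l.+1) : R :=
  if (a, b) == (i, q) then (x (i, q))%:R / (x (i, q)).+1%:R else 1.

Definition Qtag (i q : 'I_l.+1) (x y : state l) : R :=
  \sum_(a < l.+1) \sum_(b < l.+1)
    ((if y == inc_st x a b then lam a * sigma a b else 0) +
     (if (0 < x (a, b))%N && (y == dec_st x a b)
      then theta * (x (a, b))%:R + mrate (inc_st x i q) a b * share x i q a b
      else 0)).

Definition tag_exit (i q : 'I_l.+1) (x : state l) : R :=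
  theta + mrate (inc_st x i q) i q / (x (i, q)).+1%:R.

Definition out_tag (i q : 'I_l.+1) (x : state l) : R :=
  \sum_(a < l.+1) \sum_(b < l.+1)
    (lam a * sigma a b +
     (if (0 < x (a, b))%N
      then theta * (x (a, b))%:R + mrate (inc_st x i q) a b * share x i q a b
      else 0)) + tag_exit i q x.

(* first-step equations for the expected remaining time of the tagged agent *)
Definition wait_eqns (i q : 'I_l.+1) (h : state l -> \bar R) : Prop :=
  (forall x, (0 <= h x)%E) /\
  forall x, (h x * (out_tag i q x)%:E =
             1 + \esum_(y in [set: state l]) (Qtag i q x y)%:E * h y)%E.

(* expected time until the tagged agent leaves the system, as a function of
   the state of the others: the minimal nonnegative solution.              *)
Definition exp_wait_fun (i q : 'I_l.+1) (h : state l -> \bar R) : Prop :=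
  wait_eqns i q h /\ forall g, wait_eqns i q g -> forall x, (h x <= g x)%E.

(* expected steady-state waiting time of an arriving agent (PASTA) *)
Definition exp_wait (pi : state l -> R) (h : state l -> \bar R) : \bar R :=
  (\esum_(x in [set: state l]) (pi x)%:E * h x)%E.

Definition join_own_queue_best (i : 'I_l.+1) : Prop :=
  forall (q : 'I_l.+1) (pi : state l -> R) (h_own h_q : state l -> \bar R),
    stationary pi -> exp_wait_fun i i h_own -> exp_wait_fun i q h_q ->
    (exp_wait pi h_own <= exp_wait pi h_q)%E.

End Model.

Definition valid_profile {R : realType} {l : nat}
  (sigma : 'I_l.+1 -> 'I_l.+1 -> R) : Prop :=
  (forall a q, 0 <= sigma a q) /\ (forall a, \sum_(q < l.+1) sigma a q = 1).

(* Main.v *)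
Require Import Defs.
From HB Require Import structures.
From mathcomp Require Import all_boot all_order all_algebra.
From mathcomp Require Import all_classical all_reals.
From mathcomp Require Import ereal esum.
From mathcomp Require Import ring lra.
Import Order.TTheory GRing.Theory Num.Theory.
Local Open Scope classical_set_scope.
Local Open Scope ring_scope.

Lemma esum_pt (R : realType) (T : choiceType) (z : T) (c : R) (g : T -> \bar R) :
  0 <= c -> (0 <= g z)%E ->
  (\esum_(y in [set: T]) ((if y == z then c else 0)%:E * g y) = c%:E * g z)%E.
Proof.
move=> c0 g0.
transitivity (\esum_(y in [set: T]) (if y \in [set z] then c%:E * g y else 0))%E.
  apply: eq_esum => y _; rewrite in_set1; case: eqP => [->|_] //.
  by rewrite mul0e.
by rewrite -esum_mkcond esum_set1 //; apply: mule_ge0; rewrite ?lee_fin.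
Qed.

Section M.
Variables (R : realType) (l : nat) (lam mu : 'I_l.+1 -> R) (theta : R)
  (sigma : 'I_l.+1 -> 'I_l.+1 -> R).
Hypotheses (hlam : forall i, 0 < lam i) (hmu : forall j, 0 < mu j)
  (htheta : 0 < theta) (hsig : forall a q, 0 <= sigma a q).

Lemma pmatch_ge0 (x : state l) j a q : 0 <= (pmatch x j a q : R).
Proof. by rewrite /pmatch; case: ifP => // _; rewrite divr_ge0. Qed.

Lemma mrate_ge0 (x : state l) a q : 0 <= mrate mu x a q.
Proof.
by apply: sumr_ge0 => j _; rewrite mulr_ge0 ?pmatch_ge0 // ltW.
Qed.

Lemma share_ge0 (x : state l) i q a b : 0 <= (share x i q a b : R).
Proof. by rewrite /share; case: ifP => // _; rewrite divr_ge0. Qed.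

Definition Cq (i q : 'I_l.+1) (x : state l) (a b : 'I_l.+1) : R :=
  if (0 < x (a, b))%N
  then theta * (x (a, b))%:R + mrate mu (inc_st x i q) a b * share x i q a b
  else 0.

Lemma Cq_ge0 i q x a b : 0 <= Cq i q x a b.
Proof.
rewrite /Cq; case: ifP => // _; apply: addr_ge0.
  by rewrite mulr_ge0 // ltW.
by rewrite mulr_ge0 ?mrate_ge0 ?share_ge0.
Qed.

Lemma ls_ge0 a b : 0 <= lam a * sigma a b.
Proof. by rewrite mulr_ge0 // ltW. Qed.

Lemma esum_Qtag (i q : 'I_l.+1) (x : state l) (g : state l -> \bar R) :
  (forall y, 0 <= g y)%E ->
  (\esum_(y in [set: state l]) (Qtag lam mu theta sigma i q x y)%:E * g y =
   \sum_(a < l.+1) \sum_(b < l.+1)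
     ((lam a * sigma a b)%:E * g (inc_st x a b) + (Cq i q x a b)%:E * g (dec_st x a b)))%E.
Proof.
move=> g0.
have step : forall y, ((Qtag lam mu theta sigma i q x y)%:E * g y =
   \sum_(a < l.+1) \sum_(b < l.+1)
     ((if y == inc_st x a b then lam a * sigma a b else 0)%:E * g y +
      (if y == dec_st x a b then Cq i q x a b else 0)%:E * g y))%E.
  move=> y; rewrite /Qtag -sumEFin ge0_sume_distrl; last first.
    move=> a _; rewrite lee_fin; apply: sumr_ge0 => b _; apply: addr_ge0.
      by case: ifP => // _; apply: ls_ge0.
    case: ifP => // /andP[xp _]; apply: addr_ge0; first by rewrite mulr_ge0 // ltW.
    by rewrite mulr_ge0 ?mrate_ge0 ?share_ge0.
  apply: eq_bigr => a _; rewrite -sumEFin ge0_sume_distrl; last first.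
    move=> b _; rewrite lee_fin; apply: addr_ge0.
      by case: ifP => // _; apply: ls_ge0.
    case: ifP => // /andP[xp _]; apply: addr_ge0; first by rewrite mulr_ge0 // ltW.
    by rewrite mulr_ge0 ?mrate_ge0 ?share_ge0.
  apply: eq_bigr => b _; rewrite EFinD ge0_muleDl; last 2 first.
  - by rewrite lee_fin; case: ifP => // _; apply: ls_ge0.
  - rewrite lee_fin; case: ifP => // /andP[xp _]; apply: addr_ge0; first by rewrite mulr_ge0 // ltW.
    by rewrite mulr_ge0 ?mrate_ge0 ?share_ge0.
  congr (_ + _)%E; rewrite /Cq; case: (0 < x (a, b))%N; case: (y == dec_st x a b) => //.
rewrite (eq_esum (fun y _ => step y)).
rewrite esum_sum; last first.
  move=> y a _ _; apply: sume_ge0 => b _; apply: adde_ge0; apply: mule_ge0 => //;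
  rewrite lee_fin; case: ifP => // _; rewrite ?ls_ge0 ?Cq_ge0 //.
apply: eq_bigr => a _; rewrite esum_sum; last first.
  move=> y b _ _; apply: adde_ge0; apply: mule_ge0 => //;
  rewrite lee_fin; case: ifP => // _; rewrite ?ls_ge0 ?Cq_ge0 //.
apply: eq_bigr => b _; rewrite esumD; last 2 first.
- by move=> y _; apply: mule_ge0 => //; rewrite lee_fin; case: ifP => // _; rewrite ls_ge0.
- by move=> y _; apply: mule_ge0 => //; rewrite lee_fin; case: ifP => // _; rewrite Cq_ge0.
by rewrite !esum_pt ?ls_ge0 ?Cq_ge0.
Qed.
End M.

Section KT.
Variables (R : realType) (T : choiceType) (Q : T -> T -> R) (o : T -> R).
Hypotheses (Q0 : forall x y, 0 <= Q x y) (o0 : forall x, 0 < o x).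

Local Open Scope ereal_scope.
Definition Phi (f : T -> \bar R) x := \esum_(y in [set: T]) (Q x y)%:E * f y.

Lemma Phi_mono f1 f2 : (forall x, 0 <= f1 x) -> (forall x, f1 x <= f2 x) ->
  forall x, Phi f1 x <= Phi f2 x.
Proof.
move=> f10 f12 x; apply: le_esum => y _; apply: lee_wpmul2l => //.
by rewrite lee_fin.
Qed.

Lemma Phi_ge0 f : (forall x, 0 <= f x) -> forall x, 0 <= Phi f x.
Proof. by move=> f0 x; apply: esum_ge0 => y _; apply: mule_ge0 => //; rewrite lee_fin. Qed.

Lemma divK_e (z : \bar R) (r : R) : (0 < r)%R -> z * (r^-1)%:E * r%:E = z.
Proof.
move=> r0; rewrite -muleA -EFinM mulVf ?mule1 //; by rewrite gt_eqF.
Qed.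

Lemma KT_sol (g : T -> \bar R) : (forall x, 0 <= g x) ->
  (forall x, 1 + Phi g x <= g x * (o x)%:E) ->
  exists f : T -> \bar R, [/\ forall x, 0 <= f x,
     forall x, f x * (o x)%:E = 1 + Phi f x & forall x, f x <= g x].
Proof.
move=> g0 gsup.
pose F := [set f : T -> \bar R | (forall x, 0 <= f x <= g x) /\
                 forall x, 1 + Phi f x <= f x * (o x)%:E].
pose fs x := ereal_inf [set f x | f in F].
have gF : F g by split => // x; rewrite g0 lexx.
have fs0 x : 0 <= fs x.
  by apply/ereal_infP => _ [f [Hf _] <-]; case/andP: (Hf x).
have fsg x : fs x <= g x by apply: ge_ereal_inf; exists (g x) => //; exists g.
have oi0 x : (0 <= ((o x)^-1)%:E) by rewrite lee_fin invr_ge0 ltW.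
pose f' x := (1 + Phi fs x) * ((o x)^-1)%:E.
have f'fs x : f' x <= fs x.
  apply/ereal_infP => _ [f [Hf1 Hf2] <-].
  have fsf : forall y, fs y <= f y.
    by move=> y; apply: ge_ereal_inf; exists (f y) => //; exists f.
  apply: (@le_trans _ _ ((1 + Phi f x) * ((o x)^-1)%:E)).
    by apply: lee_wpmul2r => //; apply: leeD2l; apply: Phi_mono.
  apply: (@le_trans _ _ (f x * (o x)%:E * ((o x)^-1)%:E)).
    by apply: lee_wpmul2r.
  by rewrite -muleA -EFinM mulfV ?mule1 // gt_eqF.
have f'0 x : 0 <= f' x.
  by apply: mule_ge0 => //; apply: adde_ge0 => //; apply: Phi_ge0.
have f'F : F f'.
  split=> x; first by rewrite f'0 (le_trans (f'fs x)).
  rewrite /f' divK_e //; apply: leeD2l; apply: Phi_mono => // y.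
have fsf' x : fs x <= f' x by apply: ge_ereal_inf; exists (f' x) => //; exists f'.
have E x : fs x = f' x by apply: le_anti; rewrite fsf' f'fs.
exists fs; split => // x.
rewrite E /f' divK_e //.
Qed.
End KT.

Section C.
Variables (R : realType) (l : nat) (mu : 'I_l.+1 -> R).
Variables (i : 'I_l.+1) (x : state l).
Hypothesis hi0 : i != ord0.

Lemma compat_i_ne j : j != i -> compat i j = false.
Proof. by move=> ji; rewrite /compat (negPf hi0) eq_sym (negPf ji). Qed.

Lemma ncomp_inc_ne q j b : j != i -> ncomp (inc_st x i q) j b = ncomp x j b.
Proof.
move=> ji; apply: eq_bigr => c _; case: ifP => // hc; rewrite ffunE.
have -> : ((c, b) == (i, q)) = false.
  apply/negbTE; rewrite xpair_eqE; apply/nandP; left; apply/negP => /eqP ci.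
  by rewrite ci compat_i_ne in hc.
by rewrite addn0.
Qed.

Lemma ncomp_inc_i q b : ncomp (inc_st x i q) i b = (ncomp x i b + (b == q))%N.
Proof.
rewrite /ncomp.
have -> : nat_of_bool (b == q) =
   (\sum_(c < l.+1) (if compat c i then nat_of_bool ((c, b) == (i, q)) else 0))%N.
  rewrite (bigD1 i) //= big1 ?addn0.
    by rewrite /compat eqxx orbT xpair_eqE eqxx.
  by move=> c ci; case: ifP => //; rewrite xpair_eqE (negPf ci).
rewrite -big_split /=; apply: eq_bigr => c _; rewrite ffunE; by case: ifP.
Qed.

Definition pmq (q j a b : 'I_l.+1) : R :=
  if [&& compat a j, reaches (inc_st x i q) j b & (0 < ncomp (inc_st x i q) j b)%N]
  then (x (a, b))%:R / (ncomp (inc_st x i q) j b)%:R else 0.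

Lemma pmq_ge0 q j a b : 0 <= pmq q j a b.
Proof. by rewrite /pmq; case: ifP => // _; rewrite divr_ge0. Qed.

Lemma pm_share q j a b : pmatch (inc_st x i q) j a b * share x i q a b = pmq q j a b.
Proof.
rewrite /pmatch /pmq; case: ifP => _; last by rewrite mul0r.
rewrite /share ffunE; case: eqP => [[-> ->]|_]; last by rewrite addn0 mulr1.
by rewrite addn1 mulrC mulrA divfK // pnatr_eq0.
Qed.

Lemma W_sum q a b : mrate mu (inc_st x i q) a b * share x i q a b =
  \sum_(j < l.+1) mu j * pmq q j a b.
Proof. by rewrite /mrate mulr_suml; apply: eq_bigr => j _; rewrite -mulrA pm_share. Qed.

Lemma pmq_ne q j a b : j != i -> pmq q j a b = pmq i j a b.
Proof. by move=> ji; rewrite /pmq /reaches !ncomp_inc_ne. Qed.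

Definition Kr (a b : 'I_l.+1) : R := \sum_(j < l.+1 | j != i) mu j * pmq i j a b.

Lemma W_split q a b : mrate mu (inc_st x i q) a b * share x i q a b =
  mu i * pmq q i a b + Kr a b.
Proof.
rewrite W_sum (bigD1 i) //=; congr (_ + _); apply: eq_bigr => j ji.
by rewrite pmq_ne.
Qed.

Definition eI (q : 'I_l.+1) : R :=
  if reaches (inc_st x i q) i q then (ncomp (inc_st x i q) i q)%:R^-1 else 0.

Lemma E_eq q : mrate mu (inc_st x i q) i q / (x (i, q)).+1%:R = mu i * eI q.
Proof.
rewrite /mrate (bigD1 i) //= big1 ?addr0; last first.
  by move=> j ji; rewrite /pmatch compat_i_ne // mulr0.
rewrite /pmatch /eI /compat eqxx orbT /=.
have Np : (0 < ncomp (inc_st x i q) i q)%N by rewrite ncomp_inc_i eqxx addn1.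
rewrite Np andbT; case: ifP => _; last by rewrite mulr0 mul0r.
rewrite ffunE eqxx addn1.
have h1 : (x (i, q)).+1%:R != 0 :> R by rewrite pnatr_eq0.
have h2 : (ncomp (inc_st x i q) i q)%:R != 0 :> R by rewrite pnatr_eq0 -lt0n.
move: h1 h2; move: ((x (i, q)).+1%:R) ((ncomp (inc_st x i q) i q)%:R) => a N h1 h2.
by rewrite -mulrA [a / N]mulrC -mulrA mulfV // mulr1.
Qed.

Lemma pmq_x0 q j a b : x (a, b) = 0%N -> pmq q j a b = 0.
Proof. by move=> h; rewrite /pmq h mul0r; case: ifP. Qed.

Lemma Cq_eq theta q a b : @Cq R l mu theta i q x a b =
  theta * (x (a, b))%:R + (mu i * pmq q i a b + Kr a b).
Proof.
rewrite /Cq W_split; case: ifP => // /negbT; rewrite -leqNgt leqn0 => /eqP h.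
rewrite h mulr0 add0r pmq_x0 // mulr0 add0r /Kr big1 // => j _.
by rewrite pmq_x0 // mulr0.
Qed.

Lemma x_le_ncomp a j b : compat a j -> (x (a, b) <= ncomp x j b)%N.
Proof. by move=> ca; rewrite /ncomp (bigD1 a) //= ca leq_addr. Qed.

Lemma pmq_le q a b : q != i -> pmq i i a b <= pmq q i a b.
Proof.
move=> qi; rewrite {1}/pmq.
case: (boolP [&& _, _ & _]); last by rewrite pmq_ge0.
case/and3P => ca rb _.
have bi : b = i.
  move: rb; rewrite /reaches ncomp_inc_i eqxx addn1 andbF orbF.
  by move/eqP.
subst b.
rewrite /pmq ca /reaches eqxx /= !ncomp_inc_i eqxx (eq_sym i q) (negPf qi) addn0 addn1.
case: (posnP (ncomp x i i)) => [n0|np].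
  have : (x (a, i) <= 0)%N by rewrite -n0 x_le_ncomp.
  by rewrite leqn0 => /eqP h0; rewrite h0 mul0r.
apply: ler_wpM2l => //.
by rewrite lef_pV2 ?posrE ?ltr0n // ler_nat.
Qed.

Lemma sum_a_pmq q b : \sum_(a < l.+1) pmq q i a b =
  if reaches (inc_st x i q) i b && (0 < ncomp (inc_st x i q) i b)%N
  then (ncomp x i b)%:R / (ncomp (inc_st x i q) i b)%:R else 0.
Proof.
case: ifP => [/andP[r p]|h].
  rewrite /ncomp natr_sum mulr_suml; apply: eq_bigr => a _.
  rewrite /pmq r p !andbT; case: ifP => //; by rewrite mul0r.
apply: big1 => a _; rewrite /pmq; case: (compat a i) => //=; by rewrite h.
Qed.

Lemma sum_two (F : 'I_l.+1 -> R) : (forall b, b != i -> b != ord0 -> F b = 0) ->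
  \sum_(b < l.+1) F b = F i + F ord0.
Proof.
move=> h; rewrite (bigD1 i) //= (bigD1 ord0) /=; last by rewrite eq_sym.
rewrite big1 ?addr0 ?addrA // => b /andP[bi b0]; exact: h.
Qed.

Lemma total_i : \sum_(a < l.+1) \sum_(b < l.+1) pmq i i a b + eI i = 1.
Proof.
rewrite exchange_big /= (eq_bigr _ (fun b _ => sum_a_pmq i b)) sum_two; last first.
  move=> b bi b0; rewrite /reaches (negPf bi) (negPf b0) //.
rewrite /eI /reaches !ncomp_inc_i !eqxx /= (eq_sym ord0 i) (negPf hi0) /=.
rewrite addn1 addn0 /= addr0.
have h : (ncomp x i i).+1%:R != 0 :> R by rewrite pnatr_eq0.
move: h; rewrite -addn1 natrD; move: (ncomp x i i)%:R => n h.
by field.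
Qed.

Lemma total_q q : q != i ->
  \sum_(a < l.+1) \sum_(b < l.+1) pmq q i a b + eI q <= 1.
Proof.
move=> qi.
rewrite exchange_big /= (eq_bigr _ (fun b _ => sum_a_pmq q b)) sum_two; last first.
  move=> b bi b0; rewrite /reaches (negPf bi) (negPf b0) //.
rewrite /eI /reaches !ncomp_inc_i !eqxx /= (eq_sym ord0 i) (negPf hi0) (negPf qi) /=.
rewrite (eq_sym i q) (negPf qi) addn0.
case: (posnP (ncomp x i i)) => [n0|np].
  rewrite add0r /=.
  case: (eqVneq q ord0) => [->|q0].
    rewrite /= !addn1; set n := ncomp x i ord0.
    have h : n.+1%:R != 0 :> R by rewrite pnatr_eq0.
    rewrite -[n.+1]addn1 natrD in h *; move: h; move: (n%:R) => m h.
    rewrite ifT ?addn1 //. by rewrite (_ : m / (m+1) + (m+1)^-1 = 1) //; field.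
  rewrite /= addn0 addr0.
  case: ifP => [mp|_]; last by rewrite ler01.
  by rewrite mulfV // pnatr_eq0 -lt0n.
by rewrite /= !andbF !addr0 mulfV // pnatr_eq0 -lt0n.
Qed.
End C.

Section Main.
Variables (R : realType) (l : nat) (lam mu : 'I_l.+1 -> R) (theta : R)
  (sigma : 'I_l.+1 -> 'I_l.+1 -> R).
Hypotheses (hlam : forall i, 0 < lam i) (hmu : forall j, 0 < mu j)
  (htheta : 0 < theta) (hsig : forall a q, 0 <= sigma a q).
Variable (i : 'I_l.+1).
Hypothesis hi0 : i != ord0.

Notation Cq := (@Cq R l mu theta).
Let ls0 := @ls_ge0 R l lam sigma hlam hsig.
Let Cq0 := @Cq_ge0 R l mu theta hmu htheta.
Let mr0 := @mrate_ge0 R l mu hmu.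
Let sh0 := @share_ge0 R l.

Lemma eI_ge0 x q : 0 <= @eI R l i x q :> R.
Proof. by rewrite /eI; case: ifP => // _; rewrite invr_ge0. Qed.

Lemma out_eq q x : out_tag lam mu theta sigma i q x =
  \sum_(a < l.+1) \sum_(b < l.+1) (lam a * sigma a b + Cq i q x a b)
  + (theta + mu i * @eI R l i x q).
Proof. by rewrite /out_tag /tag_exit (@E_eq R l mu i x hi0 q). Qed.

Lemma out_gt0 q x : 0 < out_tag lam mu theta sigma i q x.
Proof.
rewrite out_eq; apply: ltr_wpDl.
  apply: sumr_ge0 => a _; apply: sumr_ge0 => b _.
  by rewrite addr_ge0 ?ls0 ?Cq0.
by apply: (lt_le_trans htheta); rewrite lerDl mulr_ge0 ?eI_ge0 // ltW.
Qed.

Lemma Qtag_ge0 q x y : 0 <= Qtag lam mu theta sigma i q x y.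
Proof.
apply: sumr_ge0 => a _; apply: sumr_ge0 => b _; apply: addr_ge0.
  by case: ifP => // _; apply: ls0.
case: ifP => // /andP[xp _]; apply: addr_ge0; first by rewrite mulr_ge0 // ltW.
by rewrite mulr_ge0 ?mr0 ?sh0.
Qed.

Definition RHS q x (gr : state l -> R) : R :=
  1 + \sum_(a < l.+1) \sum_(b < l.+1)
    (lam a * sigma a b * gr (inc_st x a b) + Cq i q x a b * gr (dec_st x a b)).

Lemma esum_fin q x (gr : state l -> R) : (forall y, 0 <= gr y) ->
  (1 + \esum_(y in [set: state l])
     (Qtag lam mu theta sigma i q x y)%:E * (gr y)%:E = (RHS q x gr)%:E)%E.
Proof.
move=> g0; rewrite (@esum_Qtag R l lam mu theta sigma hlam hmu htheta hsig); last by move=> y; rewrite lee_fin.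
rewrite /RHS EFinD -sumEFin; congr (_ + _)%E; apply: eq_bigr => a _.
rewrite -sumEFin; apply: eq_bigr => b _.
by rewrite -!EFinM -EFinD.
Qed.

Lemma RHS_split q x gr : RHS q x gr =
  1 + \sum_(a < l.+1) \sum_(b < l.+1)
    (lam a * sigma a b * gr (inc_st x a b) + (theta * (x (a, b))%:R + @Kr R l mu i x a b) * gr (dec_st x a b))
  + mu i * \sum_(a < l.+1) \sum_(b < l.+1) (@pmq R l i x q i a b * gr (dec_st x a b)).
Proof.
rewrite /RHS -addrA; congr (1 + _); rewrite mulr_sumr -big_split; apply: eq_bigr => a _.
rewrite mulr_sumr -big_split; apply: eq_bigr => b _; rewrite Cq_eq //=; ring.
Qed.

Lemma out_split q x : out_tag lam mu theta sigma i q x =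
  (\sum_(a < l.+1) \sum_(b < l.+1)
    (lam a * sigma a b + (theta * (x (a, b))%:R + @Kr R l mu i x a b)) + theta)
  + mu i * (\sum_(a < l.+1) \sum_(b < l.+1) @pmq R l i x q i a b + @eI R l i x q).
Proof.
rewrite out_eq.
have -> : \sum_(a < l.+1) \sum_(b < l.+1) (lam a * sigma a b + Cq i q x a b) =
  \sum_(a < l.+1) \sum_(b < l.+1)
    (lam a * sigma a b + (theta * (x (a, b))%:R + @Kr R l mu i x a b))
  + mu i * \sum_(a < l.+1) \sum_(b < l.+1) @pmq R l i x q i a b.
  rewrite mulr_sumr -big_split; apply: eq_bigr => a _.
  rewrite mulr_sumr -big_split; apply: eq_bigr => b _; rewrite Cq_eq //=; ring.
ring.
Qed.

Lemma super_real q x gr : q != i -> (forall y, 0 <= gr y) ->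
  gr x * out_tag lam mu theta sigma i q x = RHS q x gr ->
  RHS i x gr <= gr x * out_tag lam mu theta sigma i i x.
Proof.
move=> qi g0; rewrite !RHS_split !out_split.
set A := \sum_(a < l.+1) \sum_(b < l.+1) _.
set B := \sum_(a < l.+1) \sum_(b < l.+1) _ + theta.
set Si := \sum_(a < l.+1) \sum_(b < l.+1) (@pmq R l i x i i a b * _).
set Sq := \sum_(a < l.+1) \sum_(b < l.+1) (@pmq R l i x q i a b * _).
rewrite (@total_i R l i x hi0).
move: (@total_q R l i x hi0 q qi).
set Tq := (\sum_(a < l.+1) \sum_(b < l.+1) @pmq R l i x q i a b + @eI R l i x q).
move=> hT heq.
have hS : Si <= Sq.
  apply: ler_sum => a _; apply: ler_sum => b _; apply: ler_wpM2r => //.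
  exact: (@pmq_le R l i x q a b qi).
have h1 : mu i * Si <= mu i * Sq by apply: ler_wpM2l => //; apply: ltW.
have h2 : gr x * (mu i * Tq) <= gr x * (mu i * 1).
  by apply: ler_wpM2l => //; apply: ler_wpM2l => //; apply: ltW.
rewrite mulrDr in heq; rewrite mulrDr; lra.
Qed.

Lemma h_bounded q h : exp_wait_fun lam mu theta sigma i q h ->
  forall x, (h x <= (theta^-1)%:E)%E.
Proof.
case=> [[h0 heq] hmin] x.
have c0 : 0 <= theta^-1 by rewrite invr_ge0 ltW.
have sup : forall y, (1 + @Phi R (state l) (Qtag lam mu theta sigma i q) (fun _ => (theta^-1)%:E) y <=
   (theta^-1)%:E * (out_tag lam mu theta sigma i q y)%:E)%E; last first.
  have [f [f0 feq fg]] := @KT_sol R (state l) (Qtag lam mu theta sigma i q)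
    (out_tag lam mu theta sigma i q) (Qtag_ge0 q) (out_gt0 q) (fun _ => (theta^-1)%:E)
    (fun _ => c0) sup.
  by apply: le_trans (hmin f (conj f0 feq) x) (fg x).
move=> y.
rewrite /Phi (esum_fin q y (fun _ => theta^-1)) // -EFinM lee_fin.
rewrite /RHS out_eq.
have -> : \sum_(a < l.+1) \sum_(b < l.+1)
    (lam a * sigma a b * theta^-1 + Cq i q y a b * theta^-1) =
  theta^-1 * \sum_(a < l.+1) \sum_(b < l.+1) (lam a * sigma a b + Cq i q y a b).
  rewrite mulr_sumr; apply: eq_bigr => a _; rewrite mulr_sumr; apply: eq_bigr => b _.
  ring.
have e1 : theta^-1 * theta = 1 by rewrite mulVf // gt_eqF.
have e2 : 0 <= theta^-1 * (mu i * @eI R l i y q).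
  by rewrite mulr_ge0 // mulr_ge0 ?eI_ge0 // ltW.
rewrite !mulrDr; lra.
Qed.

Lemma main_pt q h1 h2 : q != i -> exp_wait_fun lam mu theta sigma i i h1 ->
  exp_wait_fun lam mu theta sigma i q h2 -> forall x, (h1 x <= h2 x)%E.
Proof.
move=> qi H1 H2.
have hb := @h_bounded q h2 H2.
case: H2 => [[h20 h2eq] _].
pose gr y := fine (h2 y).
have Hg : forall y, h2 y = (gr y)%:E.
  by move=> y; rewrite /gr fineK // ge0_fin_numE // (le_lt_trans (hb y)) // ltry.
have gr0 : forall z, 0 <= gr z by move=> z; rewrite /gr fine_ge0.
have E : h2 = (fun y => (gr y)%:E) := funext Hg.
have Heq : forall y, gr y * out_tag lam mu theta sigma i q y = RHS q y gr.
  move=> y; move: (h2eq y); rewrite E esum_fin // -EFinM; by case.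
have sup : forall y, (1 + @Phi R (state l) (Qtag lam mu theta sigma i i) h2 y <=
   h2 y * (out_tag lam mu theta sigma i i y)%:E)%E.
  move=> y; rewrite /Phi E esum_fin // -EFinM lee_fin; exact: super_real qi gr0 (Heq y).
have [f [f0 feq fg]] := @KT_sol R (state l) (Qtag lam mu theta sigma i i)
  (out_tag lam mu theta sigma i i) (Qtag_ge0 i) (out_gt0 i) h2 h20 sup.
case: H1 => [_ hmin] x; exact: le_trans (hmin f (conj f0 feq) x) (fg x).
Qed.
End Main.

Theorem lemma2 (R : realType) (l : nat) (lam mu : 'I_l.+1 -> R) (theta : R)
  (hlam : forall i, 0 < lam i) (hmu : forall j, 0 < mu j) (htheta : 0 < theta) :
  forall sigma : 'I_l.+1 -> 'I_l.+1 -> R, valid_profile sigma ->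
  forall i : 'I_l.+1, i != ord0 ->
    join_own_queue_best lam mu theta sigma i.
Proof.
move=> sigma [hsig _] i hi0 q pi h_own h_q Hpi Hown Hq.
have pt : forall x, (h_own x <= h_q x)%E.
  case: (eqVneq q i) => [qi|qi].
    subst q; case: Hown => _ hmin; exact: hmin h_q Hq.1.
  exact: (@main_pt R l lam mu theta sigma hlam hmu htheta hsig i hi0 q h_own h_q qi Hown Hq).
rewrite /exp_wait; apply: le_esum => x _; apply: lee_wpmul2l => //.
by case: Hpi => [p0 _ _]; rewrite lee_fin.
Qed.
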